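(* Let $G$ be a simple, undirected, connected graph on $N>2$ vertices with edge set $E$ and degree sequence $d_1\le d_2\le\cdots\le d_N$. Then $$R^+(G)\ge 2N(N-1)-\frac{4|E|}{1+d_1}.$$
   Context: For vertices $i,j$ of $G$, $R_{ij}$ denotes the effective resistance between $i$ and $j$ when every edge of $G$ is a unit resistor. The additive degree-Kirchhoff index is $R^+(G)=\sum_{i<j}(d_i+d_j)R_{ij}$, where $d_i$ is the degree of vertex $i$. *)

(* Defs.v *)
From HB Require Import structures.
From mathcomp Require Import all_boot all_order all_algebra.
Set Implicit Arguments. Unset Strict Implicit. Unset Printing Implicit Defensive.
Import Order.TTheory GRing.Theory Num.Theory.

Definition simple_graph N (e : rel 'I_N) : Prop :=
  symmetric e /\ irreflexive e.

Definition connected_graph N (e : rel 'I_N) : Prop :=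
  forall i j : 'I_N, connect e i j.

Definition deg N (e : rel 'I_N) (i : 'I_N) : nat := #|[set j | e i j]|.

Definition mindeg N (e : rel 'I_N) : nat := \big[minn/N]_(i < N) deg e i.

Definition nedges N (e : rel 'I_N) : nat :=
  #|[set p : 'I_N * 'I_N | (p.1 < p.2)%N && e p.1 p.2]|.

Local Open Scope ring_scope.

Definition laplacian (R : pzRingType) N (e : rel 'I_N) : 'M[R]_N :=
  \matrix_(i, j) (if i == j then (deg e i)%:R else - (e i j)%:R).

(* current vector: unit current injected at i and extracted at j *)
Definition curvec (R : pzRingType) N (i j : 'I_N) : 'cV[R]_N :=
  \col_k ((k == i)%:R - (k == j)%:R).

(* Node potentials v solving Kirchhoff's equations L v = e_i - e_j
   (normalized so that sum v = 0): for a connected graph, L + J is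
   invertible (J = all-ones matrix) and v = (L + J)^{-1} (e_i - e_j). *)
Definition potential (R : fieldType) N (e : rel 'I_N) (i j : 'I_N) : 'cV[R]_N :=
  invmx (laplacian R e + const_mx 1) *m curvec R i j.

(* effective resistance R_ij = v_i - v_j (unit resistors, unit current) *)
Definition eff_res (R : fieldType) N (e : rel 'I_N) (i j : 'I_N) : R :=
  potential R e i j i 0 - potential R e i j j 0.

Definition add_deg_kirchhoff (R : fieldType) N (e : rel 'I_N) : R :=
  \sum_(i < N) \sum_(j < N | (i < j)%N) (deg e i + deg e j)%:R * eff_res R e i j.

(* Main.v *)
Require Import Defs.
From HB Require Import structures.
From mathcomp Require Import all_boot all_order all_algebra.
From mathcomp Require Import ring lra zify.
Set Implicit Arguments. Unset Strict Implicit. Unset Printing Implicit Defensive.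
Import Order.TTheory GRing.Theory Num.Theory.
Local Open Scope ring_scope.

Definition Lf (R : realFieldType) N (e : rel 'I_N) (x : 'I_N -> R) k :=
  \sum_l (e k l)%:R * (x k - x l).
Definition Bf (R : realFieldType) N (e : rel 'I_N) (x y : 'I_N -> R) :=
  \sum_k \sum_l (e k l)%:R * ((x k - x l) * (y k - y l)).

Lemma degE (R : realFieldType) N (e : rel 'I_N) i :
  (deg e i)%:R = \sum_l (e i l)%:R :> R.
Proof.
rewrite /deg -sum1_card natr_sum big_mkcond /=; apply: eq_bigr => l _.
by rewrite inE; case: (e i l).
Qed.

Lemma Q2 (R : realFieldType) N (e : rel 'I_N) (x y : 'I_N -> R) :
  symmetric e -> 2 * \sum_k y k * Lf e x k = Bf e x y.
Proof.
move=> sym.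
have -> : \sum_k y k * Lf e x k = \sum_k \sum_l (e k l)%:R * (y k * (x k - x l)).
  apply: eq_bigr => k _; rewrite /Lf mulr_sumr; apply: eq_bigr => l _; ring.
set T := (X in 2 * X).
have T' : T = \sum_k \sum_l (e k l)%:R * (y l * (x l - x k)).
  rewrite /T exchange_big /=; apply: eq_bigr => k _; apply: eq_bigr => l _.
  by rewrite (sym l k).
have -> : 2 * T = T + T by ring.
rewrite {2}T' -big_split /=; apply: eq_bigr => k _; rewrite -big_split /=.
apply: eq_bigr => l _; ring.
Qed.

Lemma Bf_sq (R : realFieldType) N (e : rel 'I_N) (x : 'I_N -> R) : 0 <= Bf e x x.
Proof.
apply: sumr_ge0 => k _; apply: sumr_ge0 => l _.
by apply: mulr_ge0; [exact: ler0n | rewrite -expr2; exact: sqr_ge0].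
Qed.

Lemma Bf_exp (R : realFieldType) N (e : rel 'I_N) (x v : 'I_N -> R) :
  Bf e (fun k => x k - v k) (fun k => x k - v k) = Bf e x x - 2 * Bf e x v + Bf e v v.
Proof.
rewrite /Bf mulr_sumr -sumrB -big_split /=; apply: eq_bigr => k _.
rewrite mulr_sumr -sumrB -big_split /=; apply: eq_bigr => l _; ring.
Qed.

Lemma lapE (R : realFieldType) N (e : rel 'I_N) (x : 'I_N -> R) k :
  irreflexive e -> \sum_l laplacian R e k l * x l = Lf e x k.
Proof.
move=> irr.
rewrite /Lf [LHS](bigD1 k) //= [RHS](bigD1 k) //= irr subrr mulr0 add0r /laplacian.
rewrite mxE eqxx degE mulr_suml.
rewrite [X in X + _](bigD1 k) //= irr mul0r add0r.
rewrite -big_split /=; apply: eq_bigr => l /negbTE nlk.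
rewrite mxE eq_sym nlk; ring.
Qed.

Definition Mx (R : realFieldType) N (e : rel 'I_N) : 'M[R]_N :=
  laplacian R e + const_mx 1.

Lemma sumLf (R : realFieldType) N (e : rel 'I_N) (x : 'I_N -> R) :
  symmetric e -> \sum_k Lf e x k = 0.
Proof.
move=> sym.
have B0 : Bf e x (fun _ => 1) = 0.
  by rewrite /Bf big1 // => k _; rewrite big1 // => l _; rewrite subrr !mulr0.
have := Q2 x (fun _ => 1) sym; rewrite B0 => /eqP; rewrite mulf_eq0 pnatr_eq0 /= => /eqP H; rewrite -[RHS]H.
by apply: eq_bigr => k _; rewrite mul1r.
Qed.

Lemma Mx_row (R : realFieldType) N (e : rel 'I_N) (x : 'I_N -> R) k :
  irreflexive e -> \sum_l Mx R e k l * x l = Lf e x k + \sum_l x l.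
Proof.
move=> irr; rewrite -lapE // -big_split /=; apply: eq_bigr => l _.
by rewrite /Mx !mxE mulrDl mul1r.
Qed.

Lemma key (R : realFieldType) N (e : rel 'I_N) (x c : 'I_N -> R) :
  symmetric e -> irreflexive e -> (0 < N)%N ->
  (forall k, \sum_l Mx R e k l * x l = c k) -> \sum_k c k = 0 ->
  \sum_l x l = 0 /\ forall k, Lf e x k = c k.
Proof.
move=> sym irr N0 H c0.
have S0 : \sum_l x l = 0.
  have : \sum_k (Lf e x k + \sum_l x l) = 0.
    by rewrite -[RHS]c0; apply: eq_bigr => k _; rewrite -H Mx_row.
  rewrite big_split /= sumLf // add0r sumr_const card_ord -mulr_natl => /eqP.
  rewrite mulf_eq0 pnatr_eq0; case/orP => [/eqP N00|/eqP //]; by rewrite N00 in N0.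
by split=> // k; rewrite -H Mx_row // S0 addr0.
Qed.

Lemma Bf0_const (R : realFieldType) N (e : rel 'I_N) (x : 'I_N -> R) :
  connected_graph e -> Bf e x x = 0 -> forall k l, x k = x l.
Proof.
move=> con B0.
have edge : forall k l, e k l -> x k = x l.
  move=> k l ekl; move: B0; rewrite /Bf => B0.
  have h2 : \sum_l (e k l)%:R * ((x k - x l) * (x k - x l)) = 0.
    apply: (psumr_eq0P _ B0) => // k' _; apply: sumr_ge0 => l' _.
    by apply: mulr_ge0; [exact: ler0n | rewrite -expr2; exact: sqr_ge0].
  have h3 : (e k l)%:R * ((x k - x l) * (x k - x l)) = 0.
    apply: (psumr_eq0P _ h2) => // l' _.
    by apply: mulr_ge0; [exact: ler0n | rewrite -expr2; exact: sqr_ge0].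
  move: h3; rewrite ekl mul1r => /eqP; rewrite -expr2 sqrf_eq0 subr_eq0 => /eqP //.
move=> k l; case/connectP: (con k l) => p; elim: p k => [|a p IH] k /=.
  by move=> _ ->.
by case/andP=> eka pa lst; rewrite (edge _ _ eka); apply: IH.
Qed.

Lemma Mx_sym (R : realFieldType) N (e : rel 'I_N) k l :
  symmetric e -> Mx R e k l = Mx R e l k.
Proof.
move=> sym; rewrite /Mx !mxE (eq_sym l k) (sym l k).
by case: eqP => // ->.
Qed.

Lemma Mx_unit (R : realFieldType) N (e : rel 'I_N) :
  symmetric e -> irreflexive e -> connected_graph e -> (0 < N)%N ->
  Mx R e \in unitmx.
Proof.
move=> sym irr con N0.
rewrite unitmxE unitfE; apply/negP; case/det0P => w /negP w0 wM; apply: w0.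
apply/eqP/rowP => k; rewrite mxE.
pose x : 'I_N -> R := fun k => w 0 k.
have H : forall k, \sum_l Mx R e k l * x l = 0.
  move=> k'; have := congr1 (fun A : 'M[R]_(1,N) => A 0 k') wM; rewrite !mxE => H0; rewrite -[RHS]H0.
  by apply: eq_bigr => l _; rewrite mulrC Mx_sym.
have Z0 : \sum_(k : 'I_N) (0:R) = 0 by rewrite big1.
have [S0 L0] := key sym irr N0 H Z0.
have B0 : Bf e x x = 0.
  by rewrite -Q2 // big1 ?mulr0 // => k' _; rewrite L0 mulr0.
have C := Bf0_const con B0.
move: S0; rewrite (eq_bigr (fun _ => x k)) => [|l _]; last by rewrite (C l k).
rewrite sumr_const card_ord -mulr_natl => /eqP; rewrite mulf_eq0 pnatr_eq0.
case/orP => [/eqP N00|/eqP //]; by rewrite N00 in N0.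
Qed.

Lemma pick2 (R : realFieldType) N (y : 'I_N -> R) i j :
  \sum_k y k * ((k == i)%:R - (k == j)%:R) = y i - y j.
Proof.
rewrite (eq_bigr (fun k => y k * (k == i)%:R - y k * (k == j)%:R)).
  rewrite sumrB; congr (_ - _).
    by rewrite (bigD1 i) //= eqxx mulr1 big1 ?addr0 // => k /negbTE ->; rewrite mulr0.
  by rewrite (bigD1 j) //= eqxx mulr1 big1 ?addr0 // => k /negbTE ->; rewrite mulr0.
by move=> k _; rewrite mulrBr.
Qed.

Lemma Bf_sym (R : realFieldType) N (e : rel 'I_N) (x y : 'I_N -> R) :
  Bf e x y = Bf e y x.
Proof. by apply: eq_bigr => k _; apply: eq_bigr => l _; rewrite (mulrC (x k - x l)). Qed.

Lemma pot (R : realFieldType) N (e : rel 'I_N) i j :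
  symmetric e -> irreflexive e -> connected_graph e -> (0 < N)%N ->
  forall k, Lf e (fun k => potential R e i j k 0) k = (k == i)%:R - (k == j)%:R.
Proof.
move=> sym irr con N0.
have U := Mx_unit R sym irr con N0.
have E : Mx R e *m potential R e i j = curvec R i j.
  by rewrite /potential -/(Mx R e) mulKVmx.
have H : forall k, \sum_l Mx R e k l * potential R e i j l 0 = (k == i)%:R - (k == j)%:R.
  by move=> k; have := congr1 (fun A : 'cV[R]_N => A k 0) E; rewrite !mxE.
have c0 : \sum_k (((k == i)%:R - (k == j)%:R) : R) = 0.
  have := pick2 (fun _ => (1:R)) i j; rewrite subrr => H0; rewrite -[RHS]H0.
  by apply: eq_bigr => k _; rewrite mul1r.
by move=> k; have [_ L] := key sym irr N0 H c0; exact: L.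
Qed.

Lemma res_bound (R : realFieldType) N (e : rel 'I_N) i j (x : 'I_N -> R) :
  symmetric e -> irreflexive e -> connected_graph e -> (0 < N)%N ->
  2 * (x i - x j) - \sum_k x k * Lf e x k <= eff_res R e i j.
Proof.
move=> sym irr con N0.
pose v k := potential R e i j k 0.
have Lv := @pot R N e i j sym irr con N0.
have Qv : forall y, \sum_k y k * Lf e v k = y i - y j.
  by move=> y; rewrite -(pick2 y i j); apply: eq_bigr => k _; rewrite Lv.
have h := Bf_sq e (fun k => x k - v k).
rewrite Bf_exp (Bf_sym e x v) -(Q2 x x sym) -(Q2 v x sym) -(Q2 v v sym) !Qv in h.
rewrite /eff_res -/(v i) -/(v j); lra.
Qed.

Lemma Lf_test (R : realFieldType) N (e : rel 'I_N) i j (t : R) k :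
  Lf e (fun k => t * ((k == i)%:R - (k == j)%:R)) k =
  t * ((k == i)%:R - (k == j)%:R) * (deg e k)%:R - t * ((e k i)%:R - (e k j)%:R).
Proof.
rewrite /Lf degE -(pick2 (fun l => (e k l)%:R) i j) mulr_sumr mulr_sumr -sumrB.
by apply: eq_bigr => l _; ring.
Qed.

Lemma Q_test (R : realFieldType) N (e : rel 'I_N) i j (t : R) :
  symmetric e -> irreflexive e -> i != j ->
  let x := fun k => t * ((k == i)%:R - (k == j)%:R) in
  \sum_k x k * Lf e x k = t ^+ 2 * ((deg e i)%:R + (deg e j)%:R + 2 * (e i j)%:R).
Proof.
move=> sym irr nij x.
rewrite (eq_bigr (fun k => (Lf e x k * t) * ((k == i)%:R - (k == j)%:R))); last first.
  by move=> k _; rewrite /x; ring.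
rewrite pick2 /x !Lf_test eqxx (negbTE nij) eq_sym (negbTE nij) !irr (sym j i).
rewrite eqxx /=; ring.
Qed.

Lemma nedgesE (R : realFieldType) N (e : rel 'I_N) :
  (nedges e)%:R = \sum_(i < N) \sum_(j < N | (i < j)%N) (e i j)%:R :> R.
Proof.
rewrite /nedges -sum1_card natr_sum big_mkcond /=.
rewrite (eq_bigr (fun i : 'I_N => \sum_(j < N) (if (i < j)%N then (e i j)%:R else 0))); last first.
  by move=> i _; rewrite big_mkcond.
rewrite pair_big /=; apply: eq_bigr => [[a b]] _ /=; rewrite inE /=.
by case: (a < b)%N; case: (e a b).
Qed.

Lemma split1 N (i j : 'I_N) :
  (1 = nat_of_bool (i < j) + nat_of_bool (j < i) + nat_of_bool (i == j))%N.
Proof.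
rewrite -(inj_eq val_inj) /=; case: ltngtP => h /=; lia.
Qed.

Lemma pairsE (R : realFieldType) N :
  2 * \sum_(i < N) \sum_(j < N | (i < j)%N) (1:R) = N%:R * (N%:R - 1).
Proof.
have A : forall i : 'I_N, \sum_(j < N | (i < j)%N) (1:R) = \sum_(j < N) ((i < j)%N : nat)%:R.
  by move=> i; rewrite big_mkcond; apply: eq_bigr => j _; case: (i < j)%N.
have T : \sum_(i < N) \sum_(j < N) (1:R) = N%:R * N%:R.
  rewrite (eq_bigr (fun _ => N%:R)) => [|i _]; last by rewrite sumr_const card_ord.
  by rewrite sumr_const card_ord mulr_natl.
have D : \sum_(i < N) \sum_(j < N) ((i == j) : nat)%:R = N%:R :> R.
  rewrite (eq_bigr (fun _ => 1)) => [|i _]; first by rewrite sumr_const card_ord.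
  by rewrite (bigD1 i) //= eqxx big1 ?addr0 // => j /negbTE; rewrite eq_sym => ->.
have S : \sum_(i < N) \sum_(j < N) (1:R) =
   \sum_(i < N) \sum_(j < N) ((i < j)%N : nat)%:R + \sum_(i < N) \sum_(j < N) ((j < i)%N : nat)%:R
   + \sum_(i < N) \sum_(j < N) ((i == j) : nat)%:R.
  rewrite -!big_split /=; apply: eq_bigr => i _; rewrite -!big_split /=.
  by apply: eq_bigr => j _; rewrite -!natrD -split1.
have Bx : \sum_(i < N) \sum_(j < N) ((j < i)%N : nat)%:R =
    \sum_(i < N) \sum_(j < N) ((i < j)%N : nat)%:R :> R by rewrite exchange_big.
rewrite Bx D T in S.
rewrite (eq_bigr _ (fun i _ => A i)). lra.
Qed.

Lemma pair_ineq (R : realFieldType) N (e : rel 'I_N) i j :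
  symmetric e -> irreflexive e -> connected_graph e -> (0 < N)%N -> i != j ->
  0 < (deg e i)%:R + (deg e j)%:R + 2 * (e i j)%:R :> R ->
  4 <= eff_res R e i j * ((deg e i)%:R + (deg e j)%:R + 2 * (e i j)%:R).
Proof.
move=> sym irr con N0 nij.
set c := (_ + _ + _) => c0.
pose t := 2 / c.
have h := res_bound i j (fun k => t * ((k == i)%:R - (k == j)%:R)) sym irr con N0.
rewrite (Q_test t sym irr nij) -/c eqxx (negbTE nij) eq_sym (negbTE nij) /= in h.
have E : 2 * (t * (1 - 0) - t * (0 - 1)) - t ^+ 2 * c = 4 / c.
  rewrite /t; field; exact: lt0r_neq0.
rewrite eqxx E ler_pdivrMr // in h.
Qed.

Lemma deg_pos N (e : rel 'I_N) i :
  (2 < N)%N -> connected_graph e -> (0 < deg e i)%N.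
Proof.
move=> N2 con.
have [j nij] : exists j : 'I_N, j != i.
  have h0 : (0 < N)%N by lia.
  have h1 : (1 < N)%N by lia.
  case: (eqVneq i (Ordinal h0)) => [->|ne]; last by exists (Ordinal h0); rewrite eq_sym.
  by exists (Ordinal h1).
case/connectP: (con i j) => [[|a p]] /=; first by move=> _ eji; rewrite eji eqxx in nij.
case/andP=> eia _ _; apply/card_gt0P; exists a; by rewrite inE.
Qed.

Lemma mindeg_le N (e : rel 'I_N) i : (mindeg e <= deg e i)%N.
Proof.
have := mem_index_enum i; rewrite /mindeg.
elim: (index_enum _) => //= a s IH.
rewrite in_cons big_cons; case/orP => [/eqP->|/IH h]; first exact: geq_minl.
exact: leq_trans (geq_minr _ _) h.
Qed.
Unset Implicit Arguments.

Theorem corollary2 (R : realFieldType) (N : nat) (e : rel 'I_N) :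
  (2 < N)%N -> simple_graph e -> connected_graph e ->
  add_deg_kirchhoff R e >=
    2 * N%:R * (N%:R - 1) - 4 * (nedges e)%:R / (1 + (mindeg e)%:R).
Proof.
move=> N2 [sym irr] con.
have N0 : (0 < N)%N by lia.
set md : R := (mindeg e)%:R.
have md0 : 0 <= md by exact: ler0n.
have P : forall i j : 'I_N, (i < j)%N ->
    4 - 4 * (e i j)%:R / (1 + md) <= (deg e i + deg e j)%:R * eff_res R e i j.
  move=> i j lij.
  have nij : i != j by rewrite -(inj_eq val_inj) /=; lia.
  have di : (0 < deg e i)%N := deg_pos i N2 con.
  have dj : (0 < deg e j)%N := deg_pos j N2 con.
  have mi : md <= (deg e i)%:R by rewrite ler_nat mindeg_le.
  have mj : md <= (deg e j)%:R by rewrite ler_nat mindeg_le.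
  have di' : 1 <= (deg e i)%:R :> R by rewrite ler1n.
  have dj' : 0 <= (deg e j)%:R :> R by exact: ler0n.
  have ea : 0 <= (e i j)%:R :> R by exact: ler0n.
  have c0 : 0 < (deg e i)%:R + (deg e j)%:R + 2 * (e i j)%:R :> R by lra.
  have h := pair_ineq sym irr con N0 nij c0.
  rewrite natrD.
  move: h; case: (e i j) => /= h.
    have R0 : 0 <= eff_res R e i j by nra.
    have -> : 4 - 4 * 1%:R / (1 + md) = 4 * md / (1 + md).
      by field; lra.
    rewrite ler_pdivrMr; last by lra.
    have h1 : 0 <= md * (eff_res R e i j * ((deg e i)%:R + (deg e j)%:R + 2 * 1%:R) - 4).
      by apply: mulr_ge0 => //; lra.
    have h2 : 0 <= eff_res R e i j * ((deg e i)%:R + (deg e j)%:R - 2 * md).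
      by apply: mulr_ge0 => //; lra.
    nra.
  rewrite (_ : 4 * _ / _ = 0) ?subr0; last by rewrite mulr0 mul0r.
  move: h; rewrite mulr0 addr0; nra.
apply: le_trans (_ : \sum_(i < N) \sum_(j < N | (i < j)%N)
                      (4 - 4 * (e i j)%:R / (1 + md)) <= _); last first.
  by apply: ler_sum => i _; apply: ler_sum => j lij; exact: P.
rewrite (eq_bigr (fun i : 'I_N => 4 * \sum_(j < N | (i < j)%N) 1
              - 4 / (1 + md) * \sum_(j < N | (i < j)%N) (e i j)%:R)); last first.
  move=> i _; rewrite !mulr_sumr -sumrB; apply: eq_bigr => j _; ring.
rewrite sumrB -!mulr_sumr -nedgesE.
have PE := pairsE R N.
set X := \sum_(i < N) _ in PE *.
have -> : 2 * N%:R * (N%:R - 1) = 4 * X :> R by rewrite -mulrA -PE; ring.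
by rewrite mulrAC.
Qed.
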